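(* Let $\mathcal H=(M,n,\mathcal R)$ be a BMS, $S\subseteq\mathbb R^n$ a bounded convex polytope, and $x_0$ a point in the interior of $S$. The scheduler has a static winning strategy from $x_0$ if and only if there is a set $M'\subseteq M$ such that $\mathcal R(m)$ is a singleton $\{R(m)\}$ for every $m\in M'$ and the CMS $(M',n,R)$ is safe.
   Context: A multi-mode system is a tuple $\mathcal H=(M,n,\mathcal R)$ with $M$ a finite nonempty set of modes, $n\ge1$ variables, and $\mathcal R:M\to 2^{\mathbb R^n}$ giving nonempty rate sets; it is a BMS if each $\mathcal R(m)$ is a bounded convex polytope, a CMS if each is a singleton. A CMS $(M',n,R)$ is safe if there are $t_m\ge0$ ($m\in M'$) with $\sum_{m\in M'}t_m=1$ and $\sum_{m\in M'}t_mR(m)=\vec0$ (in particular $M'\neq\emptyset$). The schedulability game from $x_0$: in round $i\ge1$ the scheduler chooses $(m_i,t_i)\in M\times\mathbb R_{>0}$, the environment chooses $r_i\in\mathcal R(m_i)$, and $x_i=x_{i-1}+t_ir_i$. Scheduler strategies map finite histories $\langle x_0,(m_1,t_1),r_1,x_1,\dots,x_k\rangle$ to timed moves; environment strategies map a history and current timed move $(m,t)$ to a rate in $\mathcal R(m)$. A scheduler strategy $\sigma$ is static if $\sigma(\rho)=\sigma(\rho')$ for any two histories $\rho,\rho'$ of the same length with the same starting state and the same sequence of timed moves (i.e. it ignores the environment's choices), so it amounts to a fixed sequence $(m_1,t_1),(m_2,t_2),\dots$. A scheduler strategy is winning from $x_0$ if against every environment strategy the run satisfies $x_i\in S$ and $x_i+tr_{i+1}\in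 S$ for all $i\ge0$, $t\in[0,t_{i+1}]$, and $\sum_it_i=\infty$. *)

(* Defs.v *)
From Stdlib Require Import Reals.
From mathcomp Require Import all_boot.

Set Implicit Arguments.
Unset Strict Implicit.
Unset Printing Implicit Defensive.

Local Open Scope R_scope.

Definition vec (n : nat) := 'I_n -> R.

Definition vzero (n : nat) : vec n := fun _ => 0.
Definition vadd (n : nat) (x y : vec n) : vec n := fun j => x j + y j.
Definition vscale (n : nat) (a : R) (x : vec n) : vec n := fun j => a * x j.

Definition in_conv_hull (n : nat) (l : seq (vec n)) (x : vec n) : Prop :=
  exists w : nat -> R,
    (forall i : nat, (i < size l)%N -> 0 <= w i) /\
    \big[Rplus/0]_(i < size l) w i = 1 /\
    forall j : 'I_n,
      x j = \big[Rplus/0]_(i < size l) (w i * nth (@vzero n) l i j).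

Definition is_polytope (n : nat) (P : vec n -> Prop) : Prop :=
  exists l : seq (vec n), l <> [::] /\ forall x, P x <-> in_conv_hull l x.

(* Topological interior (w.r.t. the product / sup-norm topology, which is the
   usual topology on R^n). *)
Definition in_interior (n : nat) (S : vec n -> Prop) (x : vec n) : Prop :=
  exists eps, 0 < eps /\
    forall y : vec n, (forall j, Rabs (y j - x j) < eps) -> S y.

(* A multi-mode system (M, n, Rset) is a BMS if every rate set is a bounded
   convex polytope (polytopes here are nonempty by definition). *)
Definition is_BMS (M : finType) (n : nat) (Rset : M -> vec n -> Prop) : Prop :=
  forall m, is_polytope (Rset m).

Definition is_singleton (n : nat) (P : vec n -> Prop) (r : vec n) : Prop :=
  forall x, P x <-> x = r.

(* The CMS (M', n, Rv) is safe: a convex combination of the rates of the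
   modes of M' is zero (which forces M' nonempty). *)
Definition cms_safe (M : finType) (n : nat) (M' : {pred M}) (Rv : M -> vec n)
  : Prop :=
  exists t : M -> R,
    (forall m, m \in M' -> 0 <= t m) /\
    \big[Rplus/0]_(m | m \in M') t m = 1 /\
    forall j : 'I_n, \big[Rplus/0]_(m | m \in M') (t m * Rv m j) = 0.

(* State after k rounds, for a static schedule of durations tau and
   environment rate choices r: x_0 = x0, x_{k+1} = x_k + tau_k r_k
   (round i+1 of the paper is index i here). *)
Fixpoint run_state (n : nat) (x0 : vec n) (tau : nat -> R) (r : nat -> vec n)
  (k : nat) : vec n :=
  match k with
  | O => x0
  | S k' => vadd (run_state x0 tau r k') (vscale (tau k') (r k'))
  end.

(* A static scheduler strategy is a fixed sequence of timed moves
   (mode i, tau i) with tau i > 0.  Since it ignores the environment, the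
   runs produced against all environment strategies are exactly the runs
   for all rate sequences r with r i in Rset (mode i). *)
Definition static_winning (M : finType) (n : nat) (Rset : M -> vec n -> Prop)
  (S : vec n -> Prop) (x0 : vec n) (mode : nat -> M) (tau : nat -> R) : Prop :=
  (forall i, 0 < tau i) /\
  (forall r : nat -> vec n, (forall i, Rset (mode i) (r i)) ->
     forall i (s : R), 0 <= s <= tau i ->
       S (vadd (run_state x0 tau r i) (vscale s (r i)))) /\
  (forall B : R, exists N : nat, B < \big[Rplus/0]_(i < N) tau i).

Definition has_static_winning (M : finType) (n : nat)
  (Rset : M -> vec n -> Prop) (S : vec n -> Prop) (x0 : vec n) : Prop :=
  exists (mode : nat -> M) (tau : nat -> R),
    static_winning Rset S x0 mode tau.

(* Main.v *)
Require Import Defs.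
From Stdlib Require Import Reals Lra Lia ZArith Classical ClassicalEpsilon FunctionalExtensionality.
From HB Require Import structures.
From mathcomp Require Import all_boot.
Local Open Scope R_scope.
Set Implicit Arguments.
HB.instance Definition _ := Monoid.isComLaw.Build R 0 Rplus (fun x y z => esym (Rplus_assoc x y z)) Rplus_comm Rplus_0_l.
Lemma big_mulr_const (I : Type) (r : seq I) (P : pred I) (F : I -> R) c :
  \big[Rplus/0]_(i <- r | P i) (F i * c) = (\big[Rplus/0]_(i <- r | P i) F i) * c.
Proof.
elim/big_rec2: _ => [|i y1 y2 _ ->]; ring.
Qed.

Lemma big_ge0 (I : Type) (r : seq I) (P : pred I) (F : I -> R) :
  (forall i, P i -> 0 <= F i) -> 0 <= \big[Rplus/0]_(i <- r | P i) F i.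
Proof.
move=> H; elim/big_rec: _ => [|i y Pi Hy]; first lra.
have := H i Pi; lra.
Qed.

Lemma big_le (I : Type) (r : seq I) (P : pred I) (F G : I -> R) :
  (forall i, P i -> F i <= G i) ->
  \big[Rplus/0]_(i <- r | P i) F i <= \big[Rplus/0]_(i <- r | P i) G i.
Proof.
move=> H; elim/big_rec2: _ => [|i y1 y2 Pi Hy]; first lra.
have := H i Pi; lra.
Qed.

Lemma big_abs (I : Type) (r : seq I) (P : pred I) (F : I -> R) :
  Rabs (\big[Rplus/0]_(i <- r | P i) F i) <= \big[Rplus/0]_(i <- r | P i) Rabs (F i).
Proof.
elim/big_rec2: _ => [|i y1 y2 Pi Hy]; first by rewrite Rabs_R0; lra.
have := Rabs_triang (F i) y2; lra.
Qed.

Lemma big_term_le (I : finType) (P : pred I) (F : I -> R) i0 :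
  (forall i, P i -> 0 <= F i) -> P i0 -> F i0 <= \big[Rplus/0]_(i | P i) F i.
Proof.
move=> H Pi0; rewrite (bigD1 i0) //=.
have := @big_ge0 I (index_enum I) (fun i => P i && (i != i0)) F.
move=> /(_ _) H1. have : 0 <= \big[Rplus/0]_(i | P i && (i != i0)) F i.
  by apply: H1 => i /andP [] /H.
lra.
Qed.

Lemma run_state_sum n (x0 : vec n) tau r N j :
  run_state x0 tau r N j = x0 j + \big[Rplus/0]_(i < N) (tau i * r i j).
Proof.
elim: N => [|N IH] /=; first by rewrite big_ord0; ring.
by rewrite /vadd /vscale IH big_ord_recr /=; ring.
Qed.
Lemma polytope_nonempty n (P : vec n -> Prop) : is_polytope P -> exists x, P x.
Proof.
case=> [[|a l] [Hne HP]] //.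
exists a; apply/HP.
exists (fun i => if i == 0%N then 1 else 0); split; first by move=> i _; case: (i == 0%N); lra.
split.
  rewrite big_ord_recl /= big1; first ring. by [].
move=> j; rewrite big_ord_recl /= big1; first ring. by move=> i _; ring.
Qed.

Lemma polytope_bounded n (P : vec n -> Prop) : is_polytope P ->
  forall j, exists B, forall x, P x -> Rabs (x j) <= B.
Proof.
case=> l [_ HP] j.
exists (\big[Rplus/0]_(i < size l) Rabs (nth (@vzero n) l i j)) => x /HP [w [Hw [Hs Hx]]].
rewrite Hx; eapply Rle_trans; first apply: big_abs.
apply: big_le => i _; rewrite Rabs_mult.
have w0 := Hw i (ltn_ord i).
have w1 : w i <= 1.
  rewrite -Hs. apply: (@big_term_le _ predT (fun i : 'I_(size l) => w i)) => //.
  by move=> k _; apply: Hw.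
rewrite Rabs_pos_eq //.
have := Rabs_pos (nth (@vzero n) l i j); nra.
Qed.
Definition incr (phi : nat -> nat) := forall k, (phi k < phi k.+1)%N.

Lemma incr_ge phi : incr phi -> forall k, (k <= phi k)%N.
Proof. move=> H; elim=> [|k IH] //; exact: leq_ltn_trans IH (H k). Qed.

Lemma incr_mono phi : incr phi -> forall a b, (a <= b)%N -> (phi a <= phi b)%N.
Proof.
move=> H a b /subnK <-; elim: (b - a)%N => [|d IH] //.
rewrite addSn; exact: leq_trans IH (ltnW (H _)).
Qed.

Lemma incr_comp phi psi : incr phi -> incr psi -> incr (fun k => phi (psi k)).
Proof.
move=> Hp Hq k. have := incr_mono Hp _ _ (Hq k). move=> H. exact: leq_trans (Hp _) H.
Qed.

Lemma cv_sub u l phi : Un_cv u l -> incr phi -> Un_cv (fun k => u (phi k)) l.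
Proof.
move=> H Hp eps Heps; case: (H eps Heps) => N HN; exists N => k Hk.
apply: HN; apply/leP; apply: leq_trans (incr_ge Hp k); apply/leP; lia.
Qed.

Lemma cv_const c : Un_cv (fun _ => c) c.
Proof. move=> eps He; exists 0%nat => k _; rewrite /R_dist Rminus_diag Rabs_R0 //. Qed.

Lemma cv_ge0 u l : Un_cv u l -> (forall k, 0 <= u k) -> 0 <= l.
Proof.
move=> H Hu; apply: Rnot_lt_le => Hl.
case: (H (- l / 2) ltac:(lra)) => N /(_ N (le_n _)); rewrite /R_dist => H1.
have := Hu N; have := Rle_abs (u N - l); lra.
Qed.

Lemma cv_ext u v l : (forall k, u k = v k) -> Un_cv u l -> Un_cv v l.
Proof. move=> E H eps He; case: (H eps He) => N HN; exists N => k Hk; rewrite -E; exact: HN. Qed.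

Lemma cv_big (I : Type) (s : seq I) (P : pred I) (f : nat -> I -> R) (l : I -> R) :
  (forall i, Un_cv (fun k => f k i) (l i)) ->
  Un_cv (fun k => \big[Rplus/0]_(i <- s | P i) f k i) (\big[Rplus/0]_(i <- s | P i) l i).
Proof.
move=> H; elim: s => [|a s IH].
  rewrite big_nil; apply: (cv_ext (u := fun _ => 0)); first by move=> k; rewrite big_nil.
  exact: cv_const.
rewrite big_cons; apply: (cv_ext (u := fun k => if P a then f k a + \big[Rplus/0]_(i <- s | P i) f k i
   else \big[Rplus/0]_(i <- s | P i) f k i)); first by move=> k; rewrite big_cons.
case: (P a) => //; exact: CV_plus.
Qed.

Lemma cv_mulc u l c : Un_cv u l -> Un_cv (fun k => u k * c) (l * c).
Proof. move=> H; apply: CV_mult => //; exact: cv_const. Qed.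

Lemma extract1 (u : nat -> R) : (forall k, 0 <= u k <= 1) ->
  exists phi l, incr phi /\ Un_cv (fun k => u (phi k)) l.
Proof.
move=> Hu; case: (@Bolzano_Weierstrass u (fun c => 0 <= c <= 1) (compact_P3 0 1) Hu) => l Hl.
have Hg : forall N k : nat, {p : nat | (N <= p)%N /\ Rabs (u p - l) < / (INR k + 1)}.
  move=> N k; apply: constructive_indefinite_description.
  have Hpos : 0 < / (INR k + 1) by apply: Rinv_0_lt_compat; have := pos_INR k; lra.
  case: (Hl (disc l (mkposreal _ Hpos)) N).
    by exists (mkposreal _ Hpos) => y.
  move=> p [Hp Hd]; exists p; split; first by apply/leP.
  exact: Hd.
pose g N k := proj1_sig (Hg N k).
pose phi := fix phi k := match k with O => g 0%N 0%N | S k' => g (phi k').+1 k end.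
exists phi, l; split.
  by move=> k /=; have [H _] := proj2_sig (Hg (phi k).+1 k.+1).
move=> eps He.
have [N HN] := archimed_cor1 eps He.
exists N => k Hk.
have Hk' : Rabs (u (phi k) - l) < / (INR k + 1).
  case: k {Hk} => [|k] /=; first exact: (proj2 (proj2_sig (Hg 0%N 0%N))).
  exact: (proj2 (proj2_sig (Hg (phi k).+1 k.+1))).
rewrite /R_dist; apply: (Rlt_le_trans _ _ _ Hk').
apply: Rle_trans (Rlt_le _ _ (proj1 HN)).
apply: Rinv_le_contravar; first by apply: lt_0_INR; lia.
have := le_INR _ _ Hk; lra.
Qed.

Lemma extract_seq (M : eqType) (s : seq M) (u : nat -> M -> R) :
  (forall k m, 0 <= u k m <= 1) ->
  exists phi l, incr phi /\ forall m, m \in s -> Un_cv (fun k => u (phi k) m) (l m).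
Proof.
move=> Hu; elim: s => [|a s [phi [l [Hphi Hl]]]].
  by exists id, (fun _ => 0); split => // k /=.
have [psi [la [Hpsi Hla]]] := @extract1 (fun k => u (phi k) a) (fun k => Hu (phi k) a).
exists (fun k => phi (psi k)), (fun m => if m == a then la else l m); split.
  exact: incr_comp.
move=> m; rewrite inE; case: eqP => [-> _ //|_ /= Hm].
apply: (@cv_sub (fun k => u (phi k) m)) => //; exact: Hl.
Qed.

Lemma extract_fin (M : finType) (u : nat -> M -> R) :
  (forall k m, 0 <= u k m <= 1) ->
  exists phi l, incr phi /\ forall m, Un_cv (fun k => u (phi k) m) (l m).
Proof.
move=> Hu; have [phi [l [H1 H2]]] := @extract_seq M (enum M) u Hu.
exists phi, l; split => // m; apply: H2; by rewrite mem_enum.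
Qed.
Lemma div01 a b : 0 <= a -> a <= b -> 0 < b -> 0 <= a / b <= 1.
Proof.
move=> H1 H2 H3; unfold Rdiv; split.
  apply: Rmult_le_pos; [lra| left; apply: Rinv_0_lt_compat; lra].
apply: (Rmult_le_reg_r b) => //; rewrite Rmult_assoc Rinv_l; lra.
Qed.

Lemma forward (M : finType) n (Rset : M -> vec n -> Prop) S x0 :
  is_BMS Rset -> is_polytope S -> has_static_winning Rset S x0 ->
  exists (M' : {pred M}) (Rv : M -> vec n),
    (forall m, m \in M' -> is_singleton (Rset m) (Rv m)) /\ cms_safe M' Rv.
Proof.
move=> HB HS [mode [tau [Hpos [Hsafe Hdiv]]]].
have Hp0 : forall m, {x | Rset m x}.
  by move=> m; apply: constructive_indefinite_description; exact: polytope_nonempty (HB m).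
pose p m := proj1_sig (Hp0 m).
have Hp : forall m, Rset m (p m) := fun m => proj2_sig (Hp0 m).
have HSB := polytope_bounded HS.
have Hpos_b : forall r, (forall i, Rset (mode i) (r i)) -> forall N j B,
    (forall x, S x -> Rabs (x j) <= B) ->
    Rabs (\big[Rplus/0]_(i < N) (tau i * r i j)) <= B + Rabs (x0 j).
  move=> r Hr N j B HBj.
  have := HBj _ (Hsafe r Hr N 0 (conj (Rle_refl 0) (Rlt_le _ _ (Hpos N)))).
  rewrite /vadd /vscale run_state_sum => H.
  set s := \big[Rplus/0]_(i < N) _ in H *.
  have -> : s = (x0 j + s + 0 * r N j) + - x0 j by ring.
  apply: Rle_trans (Rabs_triang _ _) _; rewrite Rabs_Ropp; lra.
pose Tm m N := \big[Rplus/0]_(i < N) (if mode i == m then tau i else 0).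
pose Tt N := \big[Rplus/0]_(i < N) tau i.
have Hmodes : forall (c : M -> R) N, \big[Rplus/0]_(i < N) (tau i * c (mode i))
    = \big[Rplus/0]_(m : M) (Tm m N * c m).
  move=> c; elim=> [|N IH].
    rewrite big_ord0; symmetry; apply: big1 => m _; rewrite /Tm big_ord0; ring.
  rewrite big_ord_recr /= IH.
  rewrite [RHS](eq_bigr (fun m => Tm m N * c m + (if mode N == m then tau N else 0) * c m)); last first.
    by move=> m _; rewrite /Tm big_ord_recr /=; ring.
  rewrite big_split /=; congr (_ + _).
  rewrite (bigD1 (mode N)) //= eqxx big1; first ring.
  by move=> m Hm; rewrite eq_sym (negbTE Hm); ring.
have HTt : forall N, Tt N = \big[Rplus/0]_(m : M) Tm m N.
  move=> N; rewrite /Tt (eq_bigr (fun i : 'I_N => tau i * 1)); last by move=> i _; ring.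
  rewrite (Hmodes (fun _ => 1)); apply: eq_bigr => m _; ring.
have Tm_ge0 : forall m N, 0 <= Tm m N.
  move=> m N; apply: big_ge0 => i _; case: (mode i == m); [exact: Rlt_le | lra].
have Tm_le : forall m N, Tm m N <= Tt N.
  move=> m N; apply: big_le => i _; case: (mode i == m); [lra | exact: Rlt_le].
have Tt_pos : forall N, 0 < Tt N.+1.
  move=> N; rewrite /Tt big_ord_recr /=.
  have : 0 <= \big[Rplus/0]_(i < N) tau i by apply: big_ge0 => i _; exact: Rlt_le.
  move=> H; have H2 := Hpos N; set s := \big[Rplus/0]_(i < N) tau i in H *. lra.
have Tt_mono : forall a b, (a <= b)%N -> Tt a <= Tt b.
  move=> a b /subnK <-; elim: (b - a)%N => [|d IH] /=; first by rewrite add0n; lra.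
  rewrite /Tt in IH *; rewrite addSn big_ord_recr /=; have H2 := Hpos (d + a)%N; set s1 := \big[Rplus/0]_(i < a) tau i in IH *; set s2 := \big[Rplus/0]_(i < d + a) tau i in IH *. lra.
have Hdiv0 : forall phi, incr phi -> forall (g : nat -> R) C,
    (forall k, Rabs (g k) <= C) -> Un_cv (fun k => g k / Tt (phi k).+1) 0.
  move=> phi Hphi g C Hg eps He.
  case: (Hdiv (C / eps)) => N0 HN0; exists N0 => k Hk.
  have HT : Tt N0 <= Tt (phi k).+1.
    apply: Tt_mono; have H := incr_ge Hphi k.
    apply: leq_trans (leqnSn (phi k)); apply: leq_trans H; by apply/leP.
  have HTp := Tt_pos (phi k).
  rewrite -/(Tt N0) in HN0.
  have HC : C < eps * Tt (phi k).+1.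
    have -> : C = C / eps * eps by field; lra.
    have : C / eps < Tt (phi k).+1 by lra.
    move=> H; rewrite (Rmult_comm eps); apply: Rmult_lt_compat_r => //.
  rewrite /R_dist Rminus_0_r /Rdiv Rabs_mult Rabs_inv (Rabs_pos_eq (Tt _)); last lra.
  apply: (Rmult_lt_reg_r (Tt (phi k).+1)) => //.
  rewrite Rmult_assoc Rinv_l; last lra.
  have := Hg k; lra.
have Hbad : forall m x j, Rset m x -> x j <> p m j -> exists C, forall N, Tm m N <= C.
  move=> m x j Hx Hne; have [B HBj] := HSB j.
  pose r1 i := if mode i == m then x else p (mode i).
  have Hr1 : forall i, Rset (mode i) (r1 i).
    by move=> i; rewrite /r1; case: eqP => [->|_].
  have Hr0 : forall i, Rset (mode i) (p (mode i)) by move=> i.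
  have Hd : 0 < Rabs (x j - p m j) by apply: Rabs_pos_lt; lra.
  exists (2 * (B + Rabs (x0 j)) / Rabs (x j - p m j)) => N.
  have H1 := Hpos_b r1 Hr1 N j B HBj.
  have H0 := Hpos_b _ Hr0 N j B HBj.
  have E : \big[Rplus/0]_(i < N) (tau i * r1 i j) =
      \big[Rplus/0]_(i < N) (tau i * p (mode i) j) + Tm m N * (x j - p m j).
    rewrite /Tm -big_mulr_const -big_split /=; apply: eq_bigr => i _.
    rewrite /r1; case: eqP => [Hm|_]; last ring.
    rewrite Hm; ring.
  rewrite E in H1.
  set s0 := \big[Rplus/0]_(i < N) (tau i * p (mode i) j) in H0 H1.
  have H3 : Rabs (Tm m N * (x j - p m j)) <= 2 * (B + Rabs (x0 j)).
    have -> : Tm m N * (x j - p m j) = (s0 + Tm m N * (x j - p m j)) + - s0 by ring.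
    apply: Rle_trans (Rabs_triang _ _) _; rewrite Rabs_Ropp; lra.
  rewrite Rabs_mult (Rabs_pos_eq (Tm m N)) in H3; last exact: Tm_ge0.
  apply: (Rmult_le_reg_r (Rabs (x j - p m j))) => //.
  rewrite /Rdiv Rmult_assoc Rinv_l; lra.
pose w k m := Tm m k.+1 / Tt k.+1.
have Hw01 : forall k m, 0 <= w k m <= 1.
  by move=> k m; apply: div01; [apply: Tm_ge0 | apply: Tm_le | apply: Tt_pos].
have [phi [l [Hphi Hl]]] := @extract_fin M w Hw01.
have Hl0 : forall m, 0 <= l m.
  by move=> m; apply: (cv_ge0 (Hl m)) => k; case: (Hw01 (phi k) m).
have Hsum1 : \big[Rplus/0]_(m : M) l m = 1.
  have Hc := @cv_big M (index_enum M) predT (fun k m => w (phi k) m) l Hl.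
  apply: (UL_sequence _ _ _ Hc).
  apply: (@cv_ext (fun _ => 1)); last exact: cv_const.
  move=> k /=; rewrite /w /Rdiv big_mulr_const -HTt Rinv_r //.
  have := Tt_pos (phi k); lra.
have Hbad0 : forall m x j, Rset m x -> x j <> p m j -> l m = 0.
  move=> m x j Hx Hj; have [C HC] := Hbad m x j Hx Hj.
  apply: (UL_sequence _ _ _ (Hl m)).
  apply: (Hdiv0 phi Hphi (fun k => Tm m (phi k).+1) C) => k.
  by rewrite Rabs_pos_eq //; apply: Tm_ge0.
have Hbal : forall j, \big[Rplus/0]_(m : M) (l m * p m j) = 0.
  move=> j; have [B HBj] := HSB j.
  have Hc := @cv_big M (index_enum M) predT (fun k m => w (phi k) m * p m j)
     (fun m => l m * p m j) (fun m => cv_mulc (p m j) (Hl m)).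
  apply: (UL_sequence _ _ _ Hc).
  have Hr0 : forall i, Rset (mode i) (p (mode i)) by move=> i.
  apply: (@cv_ext (fun k => \big[Rplus/0]_(i < (phi k).+1) (tau i * p (mode i) j) / Tt (phi k).+1)).
    move=> k /=; have := Hmodes (fun m => p m j) (phi k).+1; rewrite /= => ->.
    rewrite /Rdiv -big_mulr_const; apply: eq_bigr => m _; rewrite /w /Rdiv; ring.
  apply: (Hdiv0 phi Hphi _ (B + Rabs (x0 j))) => k.
  exact: (Hpos_b (fun i => p (mode i)) Hr0 _ j B HBj).
exists (fun m => if Rlt_dec 0 (l m) then true else false), p; split.
  move=> m; rewrite /in_mem /=. case: Rlt_dec => // Hlm _ x; split; last by move=> ->.
  move=> Hx; apply: NNPP => Hne.
  have [j Hj] : exists j, x j <> p m j.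
    apply: not_all_ex_not => H; apply: Hne; exact: functional_extensionality.
  have := Hbad0 m x j Hx Hj; lra.
exists l; split; first by move=> m _.
split.
  rewrite big_mkcond /= -Hsum1; apply: eq_bigr => m _; rewrite /in_mem /=.
  case: Rlt_dec => // H /=; have := Hl0 m; lra.
move=> j; rewrite big_mkcond /= -[RHS](Hbal j); apply: eq_bigr => m _; rewrite /in_mem /=.
case: Rlt_dec => // H /=; have H0 := Hl0 m; have -> : l m = 0 by lra. ring.
Qed.
Lemma INR_unb (x : R) : exists q : nat, x < INR q.
Proof.
exists (Z.to_nat (up x)); have [H1 _] := archimed x.
case: (Z_lt_le_dec (up x) 0) => Hz.
  have := IZR_lt _ _ Hz; have := pos_INR (Z.to_nat (up x)); lra.
rewrite INR_IZR_INZ Z2Nat.id //.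
Qed.

Lemma periodic_sum (f : nat -> R) k : (forall i, f (k + i)%N = f i) ->
  forall q s, \big[Rplus/0]_(i < q * k + s) f i =
    INR q * \big[Rplus/0]_(i < k) f i + \big[Rplus/0]_(i < s) f i.
Proof.
move=> Hf; elim=> [|q IH] s; first by rewrite mul0n add0n /=; ring.
have -> : (q.+1 * k + s = q * k + (k + s))%N by rewrite mulSn -addnA addnCA.
rewrite IH S_INR -!(big_mkord xpredT) (@big_cat_nat _ _ _ k 0 (k + s)) //=; last exact: leq_addr.
have E := @big_addn R 0 Rplus 0 (k + s) k xpredT f; rewrite add0n addKn in E; rewrite E.
rewrite [X in _ + (_ + X)](eq_bigr f); last by move=> i _; rewrite addnC Hf.
ring.
Qed.

Lemma sum_const_le (f : nat -> R) b s : (forall i, Rabs (f i) <= b) ->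
  Rabs (\big[Rplus/0]_(i < s) f i) <= INR s * b.
Proof.
move=> H; elim: s => [|s IH]; first by rewrite big_ord0 Rabs_R0 /=; lra.
rewrite S_INR big_ord_recr /=.
set u := \big[Rplus/0]_(i < s) f i in IH *; apply: Rle_trans (Rabs_triang _ _) _; have := H s; lra.
Qed.

Lemma backward (M : finType) n (Rset : M -> vec n -> Prop) S x0 :
  in_interior S x0 ->
  (exists (M' : {pred M}) (Rv : M -> vec n),
    (forall m, m \in M' -> is_singleton (Rset m) (Rv m)) /\ cms_safe M' Rv) ->
  has_static_winning Rset S x0.
Proof.
move=> [eps [Heps Hball]] [M' [Rv [Hsing [t [Ht0 [Ht1 Ht2]]]]]].
pose pos (m : M) := (m \in M') && (if Rlt_dec 0 (t m) then true else false).
pose L := [seq m <- index_enum M | pos m].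
have HL : forall F : M -> R, (forall m, m \in M' -> ~ 0 < t m -> F m = 0) ->
    \big[Rplus/0]_(m | m \in M') F m = \big[Rplus/0]_(m <- L) F m.
  move=> F HF; rewrite /L big_filter big_mkcond [RHS]big_mkcond; apply: eq_bigr => m _.
  rewrite /pos; case Hm: (m \in M') => //=; case: Rlt_dec => //= Hn.
  by rewrite HF.
have Ht00 : forall m, m \in M' -> ~ 0 < t m -> t m = 0.
  by move=> m Hm Hn; have := Ht0 m Hm; lra.
have HtL : \big[Rplus/0]_(m <- L) t m = 1.
  by rewrite -HL.
have HvL : forall j, \big[Rplus/0]_(m <- L) (t m * Rv m j) = 0.
  move=> j; rewrite -HL; first exact: Ht2.
  by move=> m Hm Hn; rewrite Ht00 //; ring.
have HLin : forall m, m \in L -> m \in M' /\ 0 < t m.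
  move=> m; rewrite mem_filter /pos => /andP [/andP [H1 H2] _]; split => //.
  by move: H2; case: Rlt_dec.
case HLe: L => [|a L'].
  by rewrite HLe big_nil in HtL; lra.
set k := size L.
have Hk : (0 < k)%N by rewrite /k HLe.
pose mode i := nth a L (i %% k).
have Hmode : forall i, mode i \in L := fun i => mem_nth a (ltn_pmod i Hk).
pose K := 1 + \big[Rplus/0]_(m : M) \big[Rplus/0]_(j < n) Rabs (Rv m j).
have HK0 : forall m, 0 <= \big[Rplus/0]_(j < n) Rabs (Rv m j).
  by move=> m; apply: big_ge0 => j _; apply: Rabs_pos.
have HK : forall m j, Rabs (Rv m j) <= K.
  move=> m j; rewrite /K.
  have H1 : Rabs (Rv m j) <= \big[Rplus/0]_(j < n) Rabs (Rv m j) :=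
    @big_term_le 'I_n predT (fun j => Rabs (Rv m j)) j (fun j _ => Rabs_pos _) isT.
  have H2 : \big[Rplus/0]_(j < n) Rabs (Rv m j) <= \big[Rplus/0]_(m : M) \big[Rplus/0]_(j < n) Rabs (Rv m j) :=
    @big_term_le M predT (fun m => \big[Rplus/0]_(j < n) Rabs (Rv m j)) m (fun m _ => HK0 m) isT.
  lra.
have HK1 : 1 <= K.
  rewrite /K; have : 0 <= \big[Rplus/0]_(m : M) \big[Rplus/0]_(j < n) Rabs (Rv m j).
    by apply: big_ge0 => m _.
  lra.
have Ht1' : forall m, m \in L -> t m <= 1.
  move=> m /HLin [H1 _]; rewrite -Ht1.
  exact: (@big_term_le M (fun m => m \in M') t m Ht0 H1).
have HkR : 0 < INR k + 1 by have := pos_INR k; lra.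
pose c := eps / (2 * (INR k + 1) * K).
have Hc : 0 < c.
  rewrite /c /Rdiv; apply: Rmult_lt_0_compat => //; apply: Rinv_0_lt_compat.
  apply: Rmult_lt_0_compat; lra.
have HcK : (INR k + 1) * (c * K) = eps / 2 by rewrite /c; field; lra.
have Hper : forall (g : M -> R) i, g (mode (k + i)%N) = g (mode i).
  by move=> g i; rewrite /mode modnDl.
have Hfull : forall g : M -> R, \big[Rplus/0]_(i < k) g (mode i) = \big[Rplus/0]_(m <- L) g m.
  move=> g; rewrite (big_nth a) big_mkord; apply: eq_bigr => i _.
  by rewrite /mode modn_small.
exists mode, (fun i => c * t (mode i)); split; [|split].
- move=> i; have [_ H] := HLin _ (Hmode i); exact: Rmult_lt_0_compat.
- move=> r Hr i s Hs; apply: Hball => j.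
  have Hr' : forall i, r i = Rv (mode i).
    move=> i'; have [H _] := HLin _ (Hmode i'); exact: (proj1 (Hsing _ H (r i')) (Hr i')).
  rewrite /vadd /vscale run_state_sum Hr'.
  pose f i := c * t (mode i) * Rv (mode i) j.
  have E : \big[Rplus/0]_(i' < i) (c * t (mode i') * r i' j) = \big[Rplus/0]_(i' < i %% k) f i'.
    rewrite (eq_bigr (fun i' : 'I_i => f i')); last by move=> i' _; rewrite Hr'.
    have Hfp : forall i', f (k + i')%N = f i' by move=> i'; rewrite /f /mode modnDl.
    have P : forall N, N = (i %/ k * k + i %% k)%N -> \big[Rplus/0]_(i' < N) f i' = INR (i %/ k) * \big[Rplus/0]_(i' < k) f i' + \big[Rplus/0]_(i' < i %% k) f i'.
      by move=> N ->; exact: periodic_sum.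
    rewrite (P i (divn_eq i k)).
    have -> : \big[Rplus/0]_(i' < k) f i' = c * \big[Rplus/0]_(m <- L) (t m * Rv m j).
      have HF := Hfull (fun m => t m * Rv m j); simpl in HF; rewrite -HF /f.
      rewrite [LHS](eq_bigr (fun i' : 'I_k => t (mode i') * Rv (mode i') j * c)); last by move=> i' _; ring.
      rewrite big_mulr_const; ring.
    rewrite HvL; ring.
  rewrite E.
  have Hfb : forall i', Rabs (f i') <= c * K.
    move=> i'; rewrite /f Rabs_mult Rabs_mult (Rabs_pos_eq c); last lra.
    have [_ H] := HLin _ (Hmode i'); rewrite (Rabs_pos_eq (t _)); last lra.
    have := Ht1' _ (Hmode i'); have := HK (mode i') j; have := Rabs_pos (Rv (mode i') j).
    move=> H1 H2 H3.
    have : t (mode i') * Rabs (Rv (mode i') j) <= 1 * K.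
      apply: Rmult_le_compat => //; lra.
    move=> H4; have := Rmult_le_compat_l c _ _ (Rlt_le _ _ Hc) H4; lra.
  have B1 := @sum_const_le f (c * K) (i %% k) Hfb.
  have B2 : INR (i %% k) * (c * K) <= INR k * (c * K).
    apply: Rmult_le_compat_r; first by have := Rmult_lt_0_compat _ _ Hc (Rlt_le_trans _ _ _ Rlt_0_1 HK1); lra.
    apply: le_INR; apply/leP; exact: ltnW (ltn_pmod i Hk).
  have B3 : Rabs (s * Rv (mode i) j) <= c * K.
    rewrite Rabs_mult (Rabs_pos_eq s); last lra.
    have [_ H] := HLin _ (Hmode i).
    have Hs1 : s <= c by have := Ht1' _ (Hmode i); move: Hs => [_ Hs] ?; nra.
    apply: Rmult_le_compat; [lra | exact: Rabs_pos | lra | exact: HK].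
  set u := \big[Rplus/0]_(i' < i %% k) f i' in B1 *.
  have -> : x0 j + u + s * Rv (mode i) j - x0 j = u + s * Rv (mode i) j by ring.
  apply: Rle_lt_trans (Rabs_triang _ _) _.
  have : 0 < c * K by apply: Rmult_lt_0_compat; lra.
  lra.
- move=> B; have [q Hq] := INR_unb (B / c).
  exists (q * k)%N.
  have Hp' : forall i, c * t (mode (k + i)%N) = c * t (mode i) by move=> i; rewrite /mode modnDl.
  have P := @periodic_sum (fun i => c * t (mode i)) k Hp' q 0; rewrite addn0 in P; rewrite P.
  rewrite big_ord0 Rplus_0_r.
  rewrite (eq_bigr (fun i : 'I_k => t (mode i) * c)); last by move=> i _; ring.
  rewrite big_mulr_const (Hfull t) HtL Rmult_1_l.
  have -> : B = B / c * c by field; lra.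
  by apply: Rmult_lt_compat_r.
Qed.

Unset Implicit Arguments.

Theorem proposition4 (M : finType) (n : nat) (Rset : M -> vec n -> Prop)
  (S : vec n -> Prop) (x0 : vec n)
  (HM : (0 < #|M|)%N) (Hn : (1 <= n)%N)
  (HBMS : is_BMS Rset) (HS : is_polytope S) (Hx0 : in_interior S x0) :
  has_static_winning Rset S x0 <->
  exists (M' : {pred M}) (Rv : M -> vec n),
    (forall m, m \in M' -> is_singleton (Rset m) (Rv m)) /\
    cms_safe M' Rv.
Proof.
split; first exact: forward.
exact: backward.
Qed.
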